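(* Let $T$ be a rooted tree with root $r$ in which every node $u$ carries a positive integer $w(u)$ such that $w(u)\ge\sum_{v\in C(u)} w(v)$ for every node $u$, where $C(u)$ is the set of children of $u$. For an internal node $u$ with at least two children, let $\mathrm{SecW}(u)$ denote the second largest value in the multiset $\{w(v): v\in C(u)\}$, and let $\mathrm{SecW}(u)=0$ if $u$ has fewer than two children. Let $x>0$ and let $A$ be the set of nodes $u$ of $T$ with $\mathrm{SecW}(u)>x$. Then $|A| < w(r)/x$. *)

(* Defs.v *)
(* A rooted tree is a finite rose tree: a node carries its
   weight w(u) : nat and the (finite) list of its child subtrees. *)
From mathcomp Require Import all_boot all_order all_algebra.
Set Implicit Arguments. Unset Strict Implicit. Unset Printing Implicit Defensive.

Inductive wtree := Node of nat & seq wtree.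

Definition wroot (t : wtree) : nat := let: Node w _ := t in w.

Fixpoint wf_wtree (t : wtree) : bool :=
  let: Node w cs := t in
  [&& 0 < w, sumn (map wroot cs) <= w & all wf_wtree cs].

Definition secW (cs : seq wtree) : nat :=
  if 2 <= size cs then nth 0 (sort geq (map wroot cs)) 1 else 0.

(* number of nodes u of t (counted as positions in the tree) satisfying P
   applied to (w(u), children of u) *)
Fixpoint count_nodes (P : nat -> seq wtree -> bool) (t : wtree) : nat :=
  let: Node w cs := t in P w cs + sumn (map (count_nodes P) cs).

(* Main.v *)
Require Import Defs.
From mathcomp Require Import all_boot all_order all_algebra.
From mathcomp Require Import lra zify.
Import Order.TTheory GRing.Theory Num.Theory.
Local Open Scope ring_scope.

Lemma wtree_ind2 (P : wtree -> Prop) :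
  (forall w cs, foldr (fun c acc => P c /\ acc) True cs -> P (Node w cs)) ->
  forall t, P t.
Proof.
move=> H; fix IH 1; case=> w cs; apply: H.
exact: ((fix G (cs : seq wtree) : foldr (fun c acc => P c /\ acc) True cs :=
  match cs with [::] => I | c :: cs' => conj (IH c) (G cs') end) cs).
Qed.

Lemma secW_count (p : pred nat) cs : (forall a b, (a <= b)%N -> p a -> p b) ->
  ~~ p 0%N -> p (secW cs) -> (2 <= count (fun c => p (wroot c)) cs)%N.
Proof.
move=> mono p0; rewrite /secW; case: ifP => Hs H; last by rewrite H in p0.
have Hp : perm_eq (sort geq (map wroot cs)) (map wroot cs) by rewrite perm_sort.
have Ho : sorted geq (sort geq (map wroot cs)) by apply: sort_sorted => a b; exact: leq_total.
rewrite -(count_map wroot p) -(permP Hp).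
move: Ho H; have : (2 <= size (sort geq (map wroot cs)))%N by rewrite size_sort size_map.
case: (sort geq _) => [|a [|b s]] //= _ /andP[Hab _] Hb.
by rewrite Hb (mono _ _ Hab Hb).
Qed.

Section S.
Variables (R : realFieldType) (x : R).
Hypothesis xpos : 0 < x.
Definition Pr := fun (_ : nat) cs => x < (secW cs)%:R.
Definition f := count_nodes Pr.
Definition cond t := (0 < f t)%N || (x < (wroot t)%:R).
Definition Q t := wf_wtree t -> cond t -> x * (f t).+1%:R < (wroot t)%:R.

Lemma listL cs : foldr (fun c acc => Q c /\ acc) True cs -> all wf_wtree cs ->
  x * (sumn (map f cs) + count cond cs)%:R <= (sumn (map wroot cs))%:R /\
  ((0 < count cond cs)%N -> x * (sumn (map f cs) + count cond cs)%:R < (sumn (map wroot cs))%:R).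
Proof.
elim: cs => [|c cs IH] /=; first by rewrite mulr0.
move=> [Qc Hcs] /andP[wc wcs]; have [IH1 IH2] := IH Hcs wcs.
have E : (f c + sumn (map f cs) + (cond c + count cond cs) =
          (f c + cond c) + (sumn (map f cs) + count cond cs))%N by lia.
rewrite E; set S := (sumn _ + count cond cs)%N in IH1 IH2 *; rewrite natrD mulrDr (natrD _ (wroot c)).
case C: (cond c).
  have h := Qc wc C.
  have -> : x * (f c + true)%:R = x * (f c).+1%:R by rewrite /= addn1.
  split; first by apply: ltW; apply: ltr_leD.
  by move=> _; apply: ltr_leD.
have f0 : f c = 0%N by move: C; rewrite /cond; case: (f c).
rewrite f0 /= mulr0 add0r.
rewrite -[x * S%:R]add0r.
split; first by apply: lerD.
move=> h; apply: ler_ltD => //; exact: IH2.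
Qed.

Lemma sumf0 cs : count cond cs = 0%N -> sumn (map f cs) = 0%N.
Proof.
elim: cs => //= c cs IH; case C: (cond c) => //= /IH ->.
by move: C; rewrite /cond; case: (f c).
Qed.

Lemma countP cs : x < (secW cs)%:R -> (2 <= count cond cs)%N.
Proof.
move=> H; apply: (leq_trans _ (sub_count (a1 := fun c => x < (wroot c)%:R) _ cs)).
  apply: (secW_count (fun a : nat => x < a%:R)) => //.
    by move=> a b ab /= h; apply: (lt_le_trans h); rewrite ler_nat.
  by rewrite /= -leNgt ltW.
by move=> c /= h; rewrite /cond h orbT.
Qed.

Lemma mainQ t : Q t.
Proof.
elim/wtree_ind2: t => w cs Hcs; rewrite /Q => /and3P[wpos wsum wcs] Hc.
have [L1 L2] := listL cs Hcs wcs.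
have wsumR : (sumn (map wroot cs))%:R <= w%:R :> R by rewrite ler_nat.
have fE : f (Node w cs) = (Pr w cs + sumn (map f cs))%N by [].
rewrite /=; case: (boolP (0 < count cond cs)%N) => Hpos.
  have le1 : ((f (Node w cs)).+1 <= sumn (map f cs) + count cond cs)%N.
    rewrite fE; case A: (Pr w cs).
      have := countP cs A; rewrite /=; lia.
    rewrite /=; lia.
  apply: (le_lt_trans _ (lt_le_trans (L2 Hpos) wsumR)).
  by apply: ler_wpM2l; [exact: ltW | rewrite ler_nat].
have c0 : count cond cs = 0%N by move: Hpos; case: (count _ _).
have A : Pr w cs = false.
  by apply/negP => /(countP cs); rewrite c0.
by move: Hc; rewrite /cond fE A sumf0 //= mulr1.
Qed.
End S.

Theorem lemma3 (R : realFieldType) (T : wtree) (x : R) :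
  wf_wtree T -> 0 < x ->
  (count_nodes (fun _ cs => x < (secW cs)%:R) T)%:R < (wroot T)%:R / x.
Proof.
move=> wT xp; change (count_nodes _ T) with (f R x T); rewrite ltr_pdivlMr //.
have Hq := mainQ _ _ xp T wT.
have wpos : (0 < wroot T)%N by case: T wT Hq => w cs /and3P[].
case: (boolP (0 < f _ x T)%N) => Hf.
  have := Hq; rewrite /cond Hf /= => /(_ isT) h.
  apply: (le_lt_trans _ h); rewrite mulrC ler_pM2l // ler_nat; exact: (leqnSn (f R x T)).
have -> : f _ x T = 0%N by move: Hf; case: (f _ x T).
by rewrite mul0r ltr0n.
Qed.
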